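(* For all policies $\pi,\pi'\in\Pi$: if $\mathbf{Z}^{\pi}\succ_d\mathbf{Z}^{\pi'}$ then $\mathbf{V}^{\pi}\succ_p\mathbf{V}^{\pi'}$.
   Context: $\Pi$ is a family of policies of a multi-objective sequential decision problem (e.g. a multi-objective Markov decision process with $d$ objectives, vector reward $\mathbf{r}_t\in\mathbb{R}^d$ and discount $\gamma$). For $\pi\in\Pi$, $\mathbf{Z}^{\pi}=(Z^\pi_1,\dots,Z^\pi_d)^T$ is the random return vector $\sum_{t\ge0}\gamma^t\mathbf{r}_t$ obtained by following $\pi$, and $\mathbf{V}^\pi=\mathbb{E}[\mathbf{Z}^\pi]$ is its (finite) expected value. For $\mathbf{x},\mathbf{y}\in\mathbb{R}^d$: $\mathbf{y}\preceq_p\mathbf{x}$ iff $y_i\le x_i$ for all $i$; $\mathbf{x}\succ_p\mathbf{y}$ (Pareto dominance) iff $x_i\ge y_i$ for all $i$ and $x_i>y_i$ for some $i$. CDF: $F_{\mathbf{X}}(\mathbf{x})=P(\mathbf{X}\preceq_p\mathbf{x})$. $\mathbf{X}\succeq_{\mathrm{FSD}}\mathbf{Y}$ iff $F_{\mathbf{X}}\le F_{\mathbf{Y}}$ pointwise; $\mathbf{X}\succ_{\mathrm{FSD}}\mathbf{Y}$ iff additionally $F_{\mathbf{X}}(\mathbf{v})<F_{\mathbf{Y}}(\mathbf{v})$ for some $\mathbf{v}$ (same for real random variables). Distributional dominance $\mathbf{X}\succ_d\mathbf{Y}$: $\mathbf{X}\succeq_{\mathrm{FSD}}\mathbf{Y}$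 and $X_i\succ_{\mathrm{FSD}}Y_i$ for some $i\in\{1,\dots,d\}$. *)

(* Defs.v *)
From mathcomp Require Import all_boot all_order all_algebra.
From mathcomp Require Import all_classical all_reals all_analysis.
Set Implicit Arguments. Unset Strict Implicit. Unset Printing Implicit Defensive.
Import Order.TTheory GRing.Theory Num.Theory.
Local Open Scope classical_set_scope.
Local Open Scope ring_scope.

Definition cdfv {dT : measure_display} {T : measurableType dT} {R : realType}
  (P : probability T R) {d : nat} (X : T -> 'I_d -> R) (x : 'I_d -> R) : \bar R :=
  P [set w | forall i, X w i <= x i].

Definition cdf1 {dT : measure_display} {T : measurableType dT} {R : realType}
  (P : probability T R) (X : T -> R) (t : R) : \bar R :=
  P [set w | X w <= t].

(* X >=_FSD Y  iff  F_X <= F_Y pointwise (given the CDFs F = F_X, G = F_Y). *)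
Definition fsd_ge {A : Type} {R : realType} (F G : A -> \bar R) : Prop :=
  forall x, (F x <= G x)%E.

Definition fsd_gt {A : Type} {R : realType} (F G : A -> \bar R) : Prop :=
  fsd_ge F G /\ exists v, (F v < G v)%E.

Definition dist_dom {dT dU : measure_display} {T : measurableType dT}
  {U : measurableType dU} {R : realType} {d : nat}
  (P : probability T R) (X : T -> 'I_d -> R)
  (Q : probability U R) (Y : U -> 'I_d -> R) : Prop :=
  fsd_ge (cdfv P X) (cdfv Q Y) /\
  exists i : 'I_d, fsd_gt (cdf1 P (fun w => X w i)) (cdf1 Q (fun w => Y w i)).

Definition pareto_dom {R : realType} {d : nat} (x y : 'I_d -> R) : Prop :=
  (forall i, y i <= x i) /\ exists i, y i < x i.

Definition expect_vec {dT : measure_display} {T : measurableType dT} {R : realType}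
  (P : probability T R) {d : nat} (X : T -> 'I_d -> R) : 'I_d -> R :=
  fun i => fine (\int[P]_w (X w i)%:E)%E.

(* Main.v *)
Require Import Defs.
From mathcomp Require Import all_boot all_order all_algebra.
From mathcomp Require Import all_classical all_reals all_analysis.
From mathcomp Require Import lra measurable_realfun.
Import Order.TTheory GRing.Theory Num.Theory.
Local Open Scope classical_set_scope.
Local Open Scope ring_scope.

Section one.
Context (R : realType) dT dU (T : measurableType dT) (U : measurableType dU)
  (P : probability T R) (Q : probability U R)
  (X : {RV P >-> R}) (Y : {RV Q >-> R}).
Local Open Scope ereal_scope.

Let mu := @lebesgue_measure R.

Lemma ccdf_ge (le : forall t, cdf X t <= cdf Y t) t : ccdf Y t <= ccdf X t.
Proof.
rewrite !ccdf_1_cdf; apply: leeB => //.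
Qed.

Lemma arith1 (a b c d : \bar R) (k : R) : a \is a fin_num -> b \is a fin_num ->
  c \is a fin_num -> d \is a fin_num -> (0 < k)%R ->
  c <= a -> b + k%:E <= d -> c - d < a - b.
Proof.
case: a => // a; case: b => // b; case: c => // c; case: d => // d _ _ _ _ k0.
rewrite -!EFinD ?lee_fin ?lte_fin; lra.
Qed.

Lemma arith2 (a b c d : \bar R) (k : R) : a \is a fin_num -> b \is a fin_num ->
  c \is a fin_num -> d \is a fin_num -> (0 < k)%R ->
  c + k%:E <= a -> b <= d -> c - d < a - b.
Proof.
case: a => // a; case: b => // b; case: c => // c; case: d => // d _ _ _ _ k0.
rewrite -!EFinD ?lee_fin ?lte_fin; lra.
Qed.

Lemma key (LX : (X : T -> R) \in Lfun P 1) (LY : (Y : U -> R) \in Lfun Q 1)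
  (le : forall t, cdf X t <= cdf Y t) :
  'E_Q[Y] <= 'E_P[X] /\ ((exists v, cdf X v < cdf Y v) -> 'E_Q[Y] < 'E_P[X]).
Proof.
have EX := expectation_cdf_ccdf LX.
have EY := expectation_cdf_ccdf LY.
have fX : 'E_P[X] \is a fin_num by exact: expectation_fin_num.
have fY : 'E_Q[Y] \is a fin_num by exact: expectation_fin_num.
move: fX fY; rewrite EX EY.
set aX := \int[_]_(_ in _) ccdf X _.
set bX := \int[_]_(_ in _) cdf X _.
set aY := \int[_]_(_ in _) ccdf Y _.
set bY := \int[_]_(_ in _) cdf Y _.
move=> fXY fYY; move: fXY; rewrite fin_numB => /andP[faX fbX]; move: fYY; rewrite fin_numB => /andP[faY fbY].
have aXY : aY <= aX.
  apply: ge0_le_integral => //.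
  - apply: (measurable_funS measurableT) => //; exact: ccdf_measurable.
  - apply: (measurable_funS measurableT) => //; exact: ccdf_measurable.
  - by move=> t _; exact: ccdf_ge.
have bXY : bX <= bY.
  apply: ge0_le_integral => //.
  - apply: (measurable_funS measurableT) => //; exact: cdf_measurable.
  - apply: (measurable_funS measurableT) => //; exact: cdf_measurable.
split; first by apply: leeB.
move=> [v ltv].
have fin_cdf (d0 : measure_display) (T0 : measurableType d0) (P0 : probability T0 R)
   (Z0 : {RV P0 >-> R}) t : cdf Z0 t = (fine (cdf Z0 t))%:E.
  by rewrite fineK // fin_num_measure.
pose e := (fine (cdf Y v) - fine (cdf X v))%R.
have e0 : (0 < e)%R.
  by move: ltv; rewrite (fin_cdf _ _ _ X) (fin_cdf _ _ _ Y) lte_fin subr_gt0.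
have := @cdf_right_continuous _ _ _ _ X v.
rewrite [X in _ --> X](fin_cdf _ _ _ X) => /fine_cvgP [_ /cvgrPdist_lt /(_ (e/2)%R)].
rewrite divr_gt0 // => /(_ isT) [/= δ δ0 Hδ].
have key t : (v < t < v + δ)%R -> (fine (cdf X t) + e/2 <= fine (cdf Y t))%R.
  move=> /andP[vt tvd].
  have bt : (`|v - t| < δ)%R.
    by rewrite ltr_norml; apply/andP; split; lra.
  have := Hδ t bt vt; rewrite ltr_norml => /andP[h1 h2].
  have mY : (fine (cdf Y v) <= fine (cdf Y t))%R.
    rewrite fine_le ?fin_num_measure //; apply: cdf_nondecreasing; exact: ltW.
  rewrite /e in h1 h2 *; lra.
pose dd := if (v < 0)%R then Num.min δ (- v)%R else δ.
have dd0 : (0 < dd)%R.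
  rewrite /dd; case: ifP => // v0; rewrite lt_min δ0 /=; lra.
have dle : (dd <= δ)%R.
  by rewrite /dd; case: ifP => // v0; rewrite ge_min lexx.
pose I := `]v, (v + dd)%R[%classic.
have mI : measurable I by exact: measurable_itv.
have Gt2 t : cdf X t + ((e/2) * \1_I t)%:E <= cdf Y t.
  rewrite indicE; case: (boolP (t \in I)) => tI.
    rewrite (fin_cdf _ _ _ X) (fin_cdf _ _ _ Y) -EFinD lee_fin mulr1.
    apply: key; move: tI; rewrite inE /I /= in_itv /= => /andP[h1 h2].
    apply/andP; split => //; apply: (lt_le_trans h2); rewrite lerD2l; exact: dle.
  by rewrite mulr0 adde0.
have Gt t : ccdf Y t + ((e/2) * \1_I t)%:E <= ccdf X t.
  have := Gt2 t; rewrite !ccdf_1_cdf (fin_cdf _ _ _ X) (fin_cdf _ _ _ Y).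
  rewrite -!EFinD !lee_fin; lra.
have muI (D : set R) : measurable D -> I `<=` D ->
    \int[mu]_(t in D) ((e/2) * \1_I t)%:E = ((e/2) * dd)%:E.
  move=> mD ID.
  under eq_integral do rewrite EFinM.
  rewrite ge0_integralZl_EFin //; [|apply/measurable_EFinP; apply: (measurable_funS measurableT) => //; exact: measurable_indic|by rewrite divr_ge0 // ltW].
  rewrite integral_indic // setIidl // /I.
  rewrite [X in _ * X = _](_ : _ = dd%:E); first by rewrite -EFinM.
  have := @lebesgue_measure_itv R `]v, (v + dd)%R[.
  rewrite /= lte_fin ltrDl dd0 -EFinB addrAC subrr add0r; exact: id.
have k0 : (0 < (e/2) * dd)%R by rewrite mulr_gt0 // divr_gt0.
have [v0|v0] := ltP v 0%R.
  apply: (arith1 _ _ _ _ _ faX fbX faY fbY k0 aXY).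
  rewrite -(muI `]-oo, 0%R[%classic) //; last first.
    move=> t; rewrite /I /= !in_itv /= => /andP[_ h].
    apply: (lt_le_trans h); have hm : (Num.min δ (- v) <= - v)%R by rewrite ge_min lexx orbT.
    rewrite /dd v0; lra.
  rewrite -ge0_integralD //; first apply: ge0_le_integral => //.
  all: try first [ by move=> t _; exact: Gt2
             | by move=> t _; rewrite lee_fin mulr_ge0 // ?divr_ge0 // ?ltW
             | by apply: (measurable_funS measurableT) => //; exact: cdf_measurable
             | by apply/measurable_EFinP; apply: measurable_funM => //; exact: measurable_indic
             | by move=> t _; rewrite adde_ge0 // lee_fin mulr_ge0 // ?divr_ge0 // ?ltW
             | apply: emeasurable_funD; try (apply: (measurable_funS measurableT) => //; exact: cdf_measurable);
               apply/measurable_EFinP; apply: measurable_funM => //; exact: measurable_indic ].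
apply: (arith2 _ _ _ _ _ faX fbX faY fbY k0 _ bXY).
rewrite -(muI `[0%R, +oo[%classic) //; last first.
  move=> t; rewrite /I /= !in_itv /= => /andP[h _].
  by rewrite ?andbT; apply: (le_trans v0); apply: ltW.
rewrite -ge0_integralD //; first apply: ge0_le_integral => //.
all: first [ by move=> t _; exact: Gt
           | by move=> t _; rewrite lee_fin mulr_ge0 // ?divr_ge0 // ?ltW
           | by apply: (measurable_funS measurableT) => //; exact: ccdf_measurable
           | by apply/measurable_EFinP; apply: measurable_funM => //; exact: measurable_indic
           | by move=> t _; rewrite adde_ge0 // lee_fin mulr_ge0 // ?divr_ge0 // ?ltW
             | apply: emeasurable_funD; try (apply: (measurable_funS measurableT) => //; exact: ccdf_measurable);
             apply/measurable_EFinP; apply: measurable_funM => //; exact: measurable_indic ].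
Qed.
End one.
Section marg.
Context (R : realType) (d : nat).

Lemma mS dT (T : measurableType dT) (X : T -> 'I_d -> R)
  (mX : forall k, measurable_fun setT (fun w => X w k)) (x : 'I_d -> R) :
  measurable [set w | forall k, X w k <= x k].
Proof.
have -> : [set w | forall k, X w k <= x k] =
    \bigcap_(k in setT) ((fun w => X w k) @^-1` `]-oo, x k]).
  apply/seteqP; split => w /=.
    by move=> h k _ /=; rewrite in_itv /= h.
  by move=> h k; have := h k I; rewrite /= in_itv.
apply: fin_bigcap_measurable; first exact: finite_finset.
move=> k _; rewrite -[_ @^-1` _]setTI.
exact: mX.
Qed.

Lemma m1 dT (T : measurableType dT) (X : T -> 'I_d -> R)
  (mX : forall k, measurable_fun setT (fun w => X w k)) j t :
  measurable [set w | X w j <= t].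
Proof.
have -> : [set w | X w j <= t] = setT `&` ((fun w => X w j) @^-1` `]-oo, t]).
  by apply/seteqP; split => w /=; rewrite in_itv /=; [move=> ->|case].
exact: mX.
Qed.

Lemma marg dT dU (T : measurableType dT) (U : measurableType dU)
  (P : probability T R) (Q : probability U R)
  (X : T -> 'I_d -> R) (Y : U -> 'I_d -> R)
  (mX : forall k, measurable_fun setT (fun w => X w k))
  (mY : forall k, measurable_fun setT (fun w => Y w k))
  (H : fsd_ge (cdfv P X) (cdfv Q Y)) j t :
  (cdf1 P (fun w => X w j) t <= cdf1 Q (fun w => Y w j) t)%E.
Proof.
pose x (n : nat) : 'I_d -> R := fun k => if k == j then t else n%:R.
pose S n := [set w | forall k, X w k <= x n k].
have mSn n : measurable (S n) by exact: mS.
have US : \bigcup_n S n = [set w | X w j <= t].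
  apply/seteqP; split => w /=.
    by case=> n _ /(_ j); rewrite /x eqxx.
  move=> h.
  pose M := \sum_k `|X w k|.
  exists (Num.truncn M).+1 => // k; rewrite /x.
  case: eqP => [->//|_].
  apply: le_trans (ltW (truncnS_gt M)).
  apply: le_trans (ler_norm _) _.
  rewrite /M (bigD1 k) //= lerDl sumr_ge0 //.
have nd : nondecreasing_seq S.
  move=> n m nm; apply/subsetPset => w /= h k; apply: (le_trans (h k)); rewrite /x.
  by case: eqP => // _; rewrite ler_nat.
have mU : measurable (\bigcup_n S n) by rewrite US; exact: m1.
have cv := nondecreasing_cvg_mu mSn mU nd.
rewrite /cdf1 -US; apply: (cvge_to_le (nondecreasing_cvg_mu (mu := P) mSn mU nd)); apply: nearW => n /=.
apply: (le_trans (H (x n))); rewrite /cdfv.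
apply: le_measure; rewrite ?inE; [exact: mS|exact: m1|].
by move=> u /= /(_ j); rewrite /x eqxx.
Qed.
End marg.

Section key2.
Context (R : realType).
Local Open Scope ereal_scope.

Lemma key2 dT dU (T : measurableType dT) (U : measurableType dU)
  (P : probability T R) (Q : probability U R) (f : T -> R) (g : U -> R)
  (intf : P.-integrable setT (fun w => (f w)%:E))
  (intg : Q.-integrable setT (fun w => (g w)%:E))
  (le : forall t, cdf1 P f t <= cdf1 Q g t) :
  (fine (\int[Q]_w (g w)%:E) <= fine (\int[P]_w (f w)%:E))%R /\
  ((exists v, cdf1 P f v < cdf1 Q g v) ->
   (fine (\int[Q]_w (g w)%:E) < fine (\int[P]_w (f w)%:E))%R).
Proof.
have mf : measurable_fun setT f by case/integrableP: intf => /measurable_EFinP.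
have mg : measurable_fun setT g by case/integrableP: intg => /measurable_EFinP.
pose X : {RV P >-> R} := mfun_Sub (mem_set mf).
pose Y : {RV Q >-> R} := mfun_Sub (mem_set mg).
have cX t : cdf X t = cdf1 P f t.
  rewrite /cdf /cdf1 /distribution /pushforward.
  suff -> : X @^-1` `]-oo, t] = [set w | (f w <= t)%R] by [].
  by apply/seteqP; split=> w /=; rewrite in_itv.
have cY t : cdf Y t = cdf1 Q g t.
  rewrite /cdf /cdf1 /distribution /pushforward.
  suff -> : Y @^-1` `]-oo, t] = [set w | (g w <= t)%R] by [].
  by apply/seteqP; split=> w /=; rewrite in_itv.
have LX : (X : T -> R) \in Lfun P 1 by apply/Lfun1_integrable.
have LY : (Y : U -> R) \in Lfun Q 1 by apply/Lfun1_integrable.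
have le' t : cdf X t <= cdf Y t by rewrite cX cY.
have [h1 h2] := @key R dT dU T U P Q X Y LX LY le'.
have fX := expectation_fin_num LX.
have fY := expectation_fin_num LY.
rewrite !expectation_def in h1 h2 fX fY.
split; first by rewrite fine_le.
move=> [v hv]; rewrite fine_lt //; apply: h2; exists v; by rewrite cX cY.
Qed.
End key2.

Theorem lemma4p1 (R : realType) (d : nat) (Pi : Type)
  (dO : Pi -> measure_display) (Omega : forall pi : Pi, measurableType (dO pi))
  (P : forall pi : Pi, probability (Omega pi) R)
  (Z : forall pi : Pi, Omega pi -> 'I_d -> R)
  (hint : forall (pi : Pi) (i : 'I_d),
      (P pi).-integrable setT (fun w => (Z pi w i)%:E)) :
  forall pi pi' : Pi,
    dist_dom (P pi) (Z pi) (P pi') (Z pi') ->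
    pareto_dom (expect_vec (P pi) (Z pi)) (expect_vec (P pi') (Z pi')).
Proof.
move=> pi pi' [Hj [i [_ [v Hv]]]].
have mZ p k : measurable_fun setT (fun w => Z p w k).
  by case/integrableP: (hint p k) => /measurable_EFinP.
have K j := @key2 R _ _ _ _ _ _ _ _ (hint pi j) (hint pi' j) (@marg R d _ _ _ _ _ _ _ _ (mZ pi) (mZ pi') Hj j).
split; first by move=> j; have [] := K j.
exists i; have [_ h] := K i; apply: h; by exists v.
Qed.
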